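(* Let $m\ge 1$ and let $u,v,p,q\in\mathbb{R}[x,y,z,w]$ be homogeneous polynomials, all of degree $m$, such that $yp=zv$ and $yq=wv$. Define $F:\mathbb{R}^4\to\mathbb{R}^4$ by $F(x,y,z,w)=(u,v,p,q)$. Then at every point of $\mathbb{R}^4$ with $y\neq 0$, $$|J(F)| = \frac{m\,v^2\,(v\,u_x-u\,v_x)}{y^3},$$ where $|J(F)|$ is the determinant of the Jacobian matrix of $F$ and subscripts denote partial derivatives.
   Context: For $F=(F_1,F_2,F_3,F_4):\mathbb{R}^4\to\mathbb{R}^4$ in the variables $(x_1,x_2,x_3,x_4)=(x,y,z,w)$, $J(F)$ denotes the $4\times 4$ matrix $[\partial F_i/\partial x_j]$ and $|J(F)|$ its determinant. *)

(* Defs.v *)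
(* Polynomials in 4 variables (x,y,z,w) = (X0,X1,X2,X3)
   over a real field R, represented as finite lists of monomials. *)
From HB Require Import structures.
From mathcomp Require Import all_boot all_order all_algebra.
Set Implicit Arguments. Unset Strict Implicit. Unset Printing Implicit Defensive.
Import Order.TTheory GRing.Theory Num.Theory.
Local Open Scope ring_scope.

Definition mpoly (R : Type) := seq (R * ('I_4 -> nat)).

Section MPoly.
Variable R : realFieldType.

Definition meval (p : mpoly R) (a : 'I_4 -> R) : R :=
  \sum_(t <- p) t.1 * \prod_(i < 4) a i ^+ t.2 i.

Definition mderiv (j : 'I_4) (p : mpoly R) : mpoly R :=
  [seq (t.1 * (t.2 j)%:R, fun i => if i == j then (t.2 i).-1 else t.2 i) | t <- p].

Definition mhomog (m : nat) (p : mpoly R) : bool :=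
  all (fun t => (\sum_(i < 4) t.2 i)%N == m) p.

Definition jac (F : 'I_4 -> mpoly R) (a : 'I_4 -> R) : 'M[R]_4 :=
  \matrix_(i < 4, j < 4) meval (mderiv j (F i)) a.

Definition map4 (f0 f1 f2 f3 : mpoly R) : 'I_4 -> mpoly R :=
  fun i => nth f0 [:: f0; f1; f2; f3] i.
End MPoly.

Definition X0 : 'I_4 := @Ordinal 4 0 isT.
Definition X1 : 'I_4 := @Ordinal 4 1 isT.
Definition X2 : 'I_4 := @Ordinal 4 2 isT.
Definition X3 : 'I_4 := @Ordinal 4 3 isT.

(* Main.v *)
Require Import Defs.
From HB Require Import structures.
From mathcomp Require Import all_boot all_order all_algebra.
From mathcomp Require Import ring lra.
Import Order.TTheory GRing.Theory Num.Theory.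
Local Open Scope ring_scope.
Set Implicit Arguments.
Unset Strict Implicit. Unset Printing Implicit Defensive.

Section S.
Variable R : realFieldType.
Implicit Types (a : 'I_4 -> R) (P Q : mpoly R).

Lemma mderivE j P a : meval (mderiv j P) a =
  \sum_(t <- P) t.1 * (t.2 j)%:R *
    (a j ^+ (t.2 j).-1 * \prod_(i < 4 | i != j) a i ^+ t.2 i).
Proof.
rewrite /meval /mderiv big_map; apply: eq_bigr => t _ /=.
rewrite (bigD1 j) //= eqxx; congr (_ * (_ * _)).
by apply: eq_bigr => i /negbTE ->.
Qed.

Lemma mevalE j P a : meval P a =
  \sum_(t <- P) t.1 * (a j ^+ t.2 j * \prod_(i < 4 | i != j) a i ^+ t.2 i).
Proof. by rewrite /meval; apply: eq_bigr => t _; rewrite (bigD1 j). Qed.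

Lemma euler m P a : mhomog m P ->
  \sum_(j < 4) a j * meval (mderiv j P) a = m%:R * meval P a.
Proof.
move=> hm.
under eq_bigr => j _ do rewrite mderivE big_distrr.
rewrite exchange_big /= /meval big_distrr /=.
elim: P hm => [|t P IH]; first by rewrite !big_nil ?mulr0.
rewrite /= => /andP[/eqP ht hP]; rewrite !big_cons -(IH hP); congr (_ + _).
transitivity (\sum_(j < 4) (t.2 j)%:R * (t.1 * \prod_(i < 4) a i ^+ t.2 i)).
  apply: eq_bigr => j _; rewrite [in RHS](bigD1 j) //=.
  case: (t.2 j) => [|n] /=; first by rewrite !mulr0n !(mulr0, mul0r).
  rewrite exprS; ring.
by rewrite -mulr_suml -natr_sum ht.
Qed.

Definition G P a j : {poly R} :=
  \sum_(t <- P) (t.1 * \prod_(i < 4 | i != j) a i ^+ t.2 i) *: ((a j)%:P + 'X) ^+ t.2 j.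

Definition sh a j s : 'I_4 -> R := fun i => if i == j then a i + s else a i.

Lemma G_eval P a j s : (G P a j).[s] = meval P (sh a j s).
Proof.
rewrite (mevalE j) /G horner_sum; apply: eq_bigr => t _.
rewrite hornerZ horner_exp hornerD hornerC hornerX /sh eqxx.
have -> : \prod_(i < 4 | i != j) (if i == j then a i + s else a i) ^+ t.2 i =
          \prod_(i < 4 | i != j) a i ^+ t.2 i by apply: eq_bigr => i /negbTE ->.
ring.
Qed.

Lemma G_at0 P a j : (G P a j).[0] = meval P a.
Proof.
rewrite (mevalE j) /G horner_sum; apply: eq_bigr => t _.
rewrite hornerZ horner_exp hornerD hornerC hornerX addr0; ring.
Qed.

Lemma G_der0 P a j : (G P a j)^`().[0] = meval (mderiv j P) a.
Proof.
rewrite mderivE /G raddf_sum horner_sum; apply: eq_bigr => t _.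
rewrite /= derivZ deriv_exp derivD derivC derivX add0r mul1r.
rewrite hornerZ hornerMn horner_exp hornerD hornerC hornerX addr0.
rewrite mulrnAr -mulr_natr; ring.
Qed.

Lemma poly_all0 (D : {poly R}) : (forall s, D.[s] = 0) -> D = 0.
Proof.
move=> H; apply: (@roots_geq_poly_eq0 _ D [seq i%:R | i <- iota 0 (size D)]).
- by apply/allP => x /mapP [i _ ->]; apply/rootP/H.
- rewrite map_inj_uniq ?iota_uniq // => x y /eqP; rewrite eqr_nat => /eqP.
  done.
- by rewrite size_map size_iota.
Qed.

Lemma dercomb k l P Q a j :
  (forall b : 'I_4 -> R, b k * meval P b = b l * meval Q b) ->
  (k == j)%:R * meval P a + a k * meval (mderiv j P) a =
  (l == j)%:R * meval Q a + a l * meval (mderiv j Q) a.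
Proof.
move=> H.
pose Y (k : 'I_4) : {poly R} := (a k)%:P + (k == j)%:R *: 'X.
have Yev : forall k s, (Y k).[s] = sh a j s k.
  move=> k0 s; rewrite /Y /sh hornerD hornerZ hornerC hornerX.
  by case: (k0 == j); rewrite ?mul1r ?mul0r ?addr0.
have D0 : Y k * G P a j - Y l * G Q a j = 0.
  by apply: poly_all0 => s; rewrite hornerD hornerN !hornerM !G_eval !Yev H subrr.
have := congr1 (fun D => D^`().[0]) D0.
rewrite /= derivB !derivM deriv0 horner0 hornerD hornerN !hornerD !hornerM.
rewrite !G_der0 !G_at0 /Y !derivD !derivC !derivZ derivX !add0r.
rewrite !hornerD !hornerZ !hornerC !hornerX !mulr0 !addr0 !mulr1.
move/eqP; rewrite subr_eq0 => /eqP.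
done.
Qed.

Lemma det4  (f : nat -> nat -> R) :
  \det (\matrix_(i < 4, j < 4) f i j) = 0
  + f 0%N 0%N * f 1%N 1%N * f 2%N 2%N * f 3%N 3%N
  - f 0%N 0%N * f 1%N 1%N * f 2%N 3%N * f 3%N 2%N
  - f 0%N 0%N * f 1%N 2%N * f 2%N 1%N * f 3%N 3%N
  + f 0%N 0%N * f 1%N 2%N * f 2%N 3%N * f 3%N 1%N
  + f 0%N 0%N * f 1%N 3%N * f 2%N 1%N * f 3%N 2%N
  - f 0%N 0%N * f 1%N 3%N * f 2%N 2%N * f 3%N 1%N
  - f 0%N 1%N * f 1%N 0%N * f 2%N 2%N * f 3%N 3%N
  + f 0%N 1%N * f 1%N 0%N * f 2%N 3%N * f 3%N 2%N
  + f 0%N 1%N * f 1%N 2%N * f 2%N 0%N * f 3%N 3%N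
  - f 0%N 1%N * f 1%N 2%N * f 2%N 3%N * f 3%N 0%N
  - f 0%N 1%N * f 1%N 3%N * f 2%N 0%N * f 3%N 2%N
  + f 0%N 1%N * f 1%N 3%N * f 2%N 2%N * f 3%N 0%N
  + f 0%N 2%N * f 1%N 0%N * f 2%N 1%N * f 3%N 3%N
  - f 0%N 2%N * f 1%N 0%N * f 2%N 3%N * f 3%N 1%N
  - f 0%N 2%N * f 1%N 1%N * f 2%N 0%N * f 3%N 3%N
  + f 0%N 2%N * f 1%N 1%N * f 2%N 3%N * f 3%N 0%N
  + f 0%N 2%N * f 1%N 3%N * f 2%N 0%N * f 3%N 1%N
  - f 0%N 2%N * f 1%N 3%N * f 2%N 1%N * f 3%N 0%N
  - f 0%N 3%N * f 1%N 0%N * f 2%N 1%N * f 3%N 2%N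
  + f 0%N 3%N * f 1%N 0%N * f 2%N 2%N * f 3%N 1%N
  + f 0%N 3%N * f 1%N 1%N * f 2%N 0%N * f 3%N 2%N
  - f 0%N 3%N * f 1%N 1%N * f 2%N 2%N * f 3%N 0%N
  - f 0%N 3%N * f 1%N 2%N * f 2%N 0%N * f 3%N 1%N
  + f 0%N 3%N * f 1%N 2%N * f 2%N 1%N * f 3%N 0%N.
Proof.
rewrite (expand_det_row _ 0) !big_ord_recl big_ord0 /cofactor.
rewrite !(expand_det_row _ 0) !big_ord_recl !big_ord0 /cofactor.
rewrite !(expand_det_row _ 0) !big_ord_recl !big_ord0 /cofactor.
rewrite !det_mx11 !mxE /= /bump /=.
cbv [addn addn_rec Nat.add].
rewrite !expr0 ?expr1 ?expr2. 
rewrite !exprS !expr0. ring.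
Qed.

Lemma sum4 (F : 'I_4 -> R) : \sum_(i < 4) F i = F X0 + F X1 + F X2 + F X3.
Proof.
rewrite !big_ord_recl big_ord0 addr0 !addrA.
by congr (_ + _ + _ + _); congr F; apply: val_inj.
Qed.

Lemma solve2 (y x c e : R) : y != 0 -> c + y * x = e -> x = (e - c) / y.
Proof. by move=> nz <-; field. Qed.

Lemma solve3 (y x A B C e : R) : y != 0 -> A + y * x + B + C = e ->
  x = (e - A - B - C) / y.
Proof. by move=> nz <-; field. Qed.

Lemma solve (y x e : R) : y != 0 -> y * x = e -> x = e / y.
Proof. by move=> nz <-; rewrite mulrAC mulfV // mul1r. Qed.

End S.

Theorem lemma3p1 (R : realFieldType) (m : nat) (u v p q : mpoly R) :
  (1 <= m)%N ->
  mhomog m u -> mhomog m v -> mhomog m p -> mhomog m q ->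
  (forall a : 'I_4 -> R, a X1 * meval p a = a X2 * meval v a) ->
  (forall a : 'I_4 -> R, a X1 * meval q a = a X3 * meval v a) ->
  forall a : 'I_4 -> R, a X1 != 0 ->
    \det (jac (map4 u v p q) a) =
    m%:R * (meval v a) ^+ 2
      * (meval v a * meval (mderiv X0 u) a - meval u a * meval (mderiv X0 v) a)
      / (a X1) ^+ 3.
Proof.
move=> _ hu hv _ _ Hp Hq a ya.
have -> : jac (map4 u v p q) a = \matrix_(i < 4, j < 4)
   meval (mderiv (inord j) (nth u [:: u; v; p; q] i)) a.
  by apply/matrixP => i j; rewrite !mxE inord_val.
rewrite (det4 (fun i j : nat => meval (mderiv (inord j) (nth u [:: u; v; p; q] i)) a)) /=.
have I0 : inord 0 = X0 by apply: val_inj; rewrite /= inordK.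
have I1 : inord 1 = X1 by apply: val_inj; rewrite /= inordK.
have I2 : inord 2 = X2 by apply: val_inj; rewrite /= inordK.
have I3 : inord 3 = X3 by apply: val_inj; rewrite /= inordK.
rewrite I0 I1 I2 I3.
have eu := euler a hu; have ev := euler a hv; rewrite sum4 in eu; rewrite sum4 in ev.
have p0 := dercomb a X0 Hp; have p1 := dercomb a X1 Hp;
have p2 := dercomb a X2 Hp; have p3 := dercomb a X3 Hp.
have q0 := dercomb a X0 Hq; have q1 := dercomb a X1 Hq;
have q2 := dercomb a X2 Hq; have q3 := dercomb a X3 Hq.
have hp := Hp a; have hq := Hq a.
move: eu ev p0 p1 p2 p3 q0 q1 q2 q3 hp hq. rewrite /=.
move: ya.
move: (meval (mderiv X0 u) a) (meval (mderiv X1 u) a) (meval (mderiv X2 u) a) (meval (mderiv X3 u) a) (meval (mderiv X0 v) a) (meval (mderiv X1 v) a) (meval (mderiv X2 v) a) (meval (mderiv X3 v) a) (meval (mderiv X0 p) a) (meval (mderiv X1 p) a) (meval (mderiv X2 p) a) (meval (mderiv X3 p) a) (meval (mderiv X0 q) a) (meval (mderiv X1 q) a) (meval (mderiv X2 q) a) (meval (mderiv X3 q) a) (meval u a) (meval v a) (meval p a) (meval q a)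
  => ux uy uz uw vx vy vz vw px py pz pw qx qy qz qw U V P Q.
move: (a X0) (a X1) (a X2) (a X3) (m%:R)
  => x y z w M yn eu ev p0 p1 p2 p3 q0 q1 q2 q3 hp hq.
rewrite (solve2 yn p0) (solve2 yn p1) (solve2 yn p2) (solve2 yn p3).
rewrite (solve2 yn q0) (solve2 yn q1) (solve2 yn q2) (solve2 yn q3).
rewrite (solve3 yn eu) (solve3 yn ev).
rewrite (solve yn hp) (solve yn hq).
rewrite ?mulr0n ?mulr1n ?mul0r ?mul1r. by field.
Qed.
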